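(* Let $p$ be an odd prime, $n\ge1$, $r>t\ge0$ integers and $c\in\mathbb{F}_p^*$. If $f(x)=\mathrm{Tr}_n(cx^{p^r+1}-cx^{p^t+1})$ with $\gcd(n,r+t)=\gcd(n,r-t)=\gcd(n,p)=1$, then the kernel in $\mathbb{F}_{p^n}$ of the linearized polynomial $L(z)=c\big(z+z^{p^{2r}}-z^{p^{r-t}}-z^{p^{r+t}}\big)$ corresponding to $f$ is $\mathbb{F}_p$. If $f(x)=\mathrm{Tr}_n(cx^{p^r+1}+cx^{p^t+1})$ with $\gcd(n,2(r+t))=\gcd(n,2(r-t))=2$, $r-t$ odd and $\gcd(n,p)=1$, then the kernel in $\mathbb{F}_{p^n}$ of the corresponding linearized polynomial $L(z)=c\big(z+z^{p^{2r}}+z^{p^{r-t}}+z^{p^{r+t}}\big)$ is the set of roots of $z^p+z$, all of which lie in $\mathbb{F}_{p^2}$.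
   Context: $\mathrm{Tr}_n$ denotes the absolute trace $\mathbb{F}_{p^n}\to\mathbb{F}_p$. The kernel of $L$ means $\{z\in\mathbb{F}_{p^n}: L(z)=0\}$. *)

(* Defs.v *)
From HB Require Import structures.
From mathcomp Require Import all_boot all_order all_algebra all_field.
Set Implicit Arguments. Unset Strict Implicit. Unset Printing Implicit Defensive.
Import GRing.Theory.
Local Open Scope ring_scope.

Definition primeSubfield (F : finFieldType) (p : nat) : {set F} :=
  [set (k%:R : F) | k : 'I_p].

Definition kernel (F : finFieldType) (L : F -> F) : {set F} :=
  [set z : F | L z == 0].

Definition Lminus (F : finFieldType) (p r t : nat) (c : F) (z : F) : F :=
  c * (z + z ^+ (p ^ (2 * r)) - z ^+ (p ^ (r - t)) - z ^+ (p ^ (r + t))).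

Definition Lplus (F : finFieldType) (p r t : nat) (c : F) (z : F) : F :=
  c * (z + z ^+ (p ^ (2 * r)) + z ^+ (p ^ (r - t)) + z ^+ (p ^ (r + t))).

(* Main.v *)
Require Import Defs.
From HB Require Import structures.
From mathcomp Require Import all_boot all_order all_algebra all_field.
From mathcomp Require Import ring zify.
Import GRing.Theory.
Set Implicit Arguments. Unset Strict Implicit.
Local Open Scope ring_scope.

Definition fr (F : finFieldType) (p k : nat) (z : F) : F := z ^+ (p ^ k)%N.
Arguments fr {F}.

Lemma frD (F : finFieldType) p i j (z : F) : fr p (i + j) z = fr p i (fr p j z).
Proof. by rewrite /fr expnD mulnC exprM. Qed.

Lemma fr0 (F : finFieldType) p (z : F) : fr p 0 z = z.
Proof. by rewrite /fr expn0 expr1. Qed.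

Lemma fr1 (F : finFieldType) p (z : F) : fr p 1 z = z ^+ p.
Proof. by rewrite /fr expn1. Qed.

Lemma pnat_pk (F : finFieldType) p k : prime p -> p \in [pchar F] -> [pchar F].-nat (p ^ k)%N.
Proof. by move=> pr pc; rewrite pnatX pnatE // pc. Qed.

Lemma fr_add (F : finFieldType) p k (x y : F) : prime p -> p \in [pchar F] ->
  fr p k (x + y) = fr p k x + fr p k y.
Proof. by move=> pr pc; rewrite /fr exprDn_pchar // pnat_pk. Qed.

Lemma fr_opp (F : finFieldType) p k (x : F) : prime p -> p \in [pchar F] ->
  fr p k (- x) = - fr p k x.
Proof. by move=> pr pc; rewrite /fr exprNn_pchar // pnat_pk. Qed.

Lemma fr_sub (F : finFieldType) p k (x y : F) : prime p -> p \in [pchar F] ->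
  fr p k (x - y) = fr p k x - fr p k y.
Proof. by move=> pr pc; rewrite fr_add // fr_opp. Qed.

Lemma fr_mul (F : finFieldType) p k (x y : F) : fr p k (x * y) = fr p k x * fr p k y.
Proof. by rewrite /fr exprMn. Qed.

Lemma fr_nat (F : finFieldType) p k m : prime p -> p \in [pchar F] ->
  fr p k (m%:R : F) = m%:R.
Proof.
move=> pr pc; elim: m => [|m IH]; first by rewrite /fr expr0n expn_eq0; case: eqP => // p0; move: pr; rewrite p0.
by rewrite -natr1 fr_add // IH /fr expr1n.
Qed.

Lemma fr_card (F : finFieldType) p n (z : F) : #|F| = (p ^ n)%N -> fr p n z = z.
Proof. by move=> cF; rewrite /fr -cF expf_card. Qed.

Lemma fr_iter (F : finFieldType) p a (z : F) : fr p a z = z -> forall j, fr p (j * a) z = z.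
Proof. by move=> H; elim=> [|j IH]; rewrite ?mul0n ?fr0 // mulSn frD IH. Qed.

Lemma fr_gcd (F : finFieldType) p n a (z : F) : (0 < n)%N -> #|F| = (p ^ n)%N ->
  fr p a z = z -> fr p (gcdn n a) z = z.
Proof.
move=> n0 cF H; case: (egcdnP a n0) => km kn E _.
have: fr p (kn * a + gcdn n a) z = z by rewrite -E fr_iter // fr_card.
by rewrite addnC frD fr_iter.
Qed.

Lemma fr_mod2 (F : finFieldType) p (x : F) k : fr p 2 x = x -> fr p k x = fr p (odd k) x.
Proof.
move=> H; have E : k = (odd k + k./2 * 2)%N by rewrite muln2 odd_double_half.
by rewrite {1}E frD fr_iter.
Qed.

Lemma fr_all (F : finFieldType) p (x : F) k : fr p 1 x = x -> fr p k x = x.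
Proof. by move=> H; rewrite -(muln1 k) fr_iter. Qed.

Lemma card_roots (F : finFieldType) (P : {poly F}) (A : {set F}) : P != 0 ->
  (forall z, z \in A -> root P z) -> (#|A| < size P)%N.
Proof.
move=> P0 HA; rewrite cardE; apply: max_poly_roots => //; last exact: enum_uniq.
by apply/allP => z; rewrite mem_enum; apply: HA.
Qed.

Lemma Fp_fix (F : finFieldType) p (z : F) : prime p -> p \in [pchar F] ->
  (z \in primeSubfield F p) = (z ^+ p == z).
Proof.
move=> pr pc.
set S := [set z : F | z ^+ p == z].
have sub : primeSubfield F p \subset S.
  apply/subsetP => x /imsetP [k _ ->]; rewrite inE -fr1 fr_nat //.
have cP : #|primeSubfield F p| = p.
  rewrite card_imset ?card_ord // => k l E.
  apply: val_inj => /=.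
  wlog kl : k l E / (k <= l)%N.
    move=> W; case: (leqP k l) => [|/ltnW] h; first exact: W.
    by apply/esym/W.
  have : (p %| l - k)%N by rewrite (dvdn_pcharf pc) natrB // E subrr.
  move=> /dvdn_leq; have := ltn_ord l; have := ltn_ord k; lia.
have cS : (#|S| <= p)%N.
  have sz : size ('X^p - 'X : {poly F}) = p.+1.
    rewrite size_polyDl ?size_polyXn // size_polyN size_polyX ltnS prime_gt1 //.
  rewrite -ltnS -sz; apply: card_roots.
    by rewrite -size_poly_eq0 sz.
  by move=> x; rewrite inE rootE !hornerE subr_eq0.
have -> : primeSubfield F p = S by apply/eqP; rewrite eqEcard sub cP.
by rewrite inE.
Qed.

Lemma natr_neq0 (F : finFieldType) p n : prime p -> p \in [pchar F] -> (0 < n)%N ->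
  coprime n p -> (n%:R : F) != 0.
Proof.
move=> pr pc n0 cop; rewrite -(dvdn_pcharf pc) -prime_coprime // coprime_sym //.
Qed.

Lemma case1 (F : finFieldType) (p n r t : nat) (c : F) :
  prime p -> p \in [pchar F] -> (0 < n)%N -> #|F| = (p ^ n)%N ->
  (t < r)%N -> c != 0 ->
  gcdn n (r + t) = 1%N -> gcdn n (r - t) = 1%N -> coprime n p ->
    kernel (Lminus p r t c) = primeSubfield F p.
Proof.
move=> pr pc n0 cF tr c0 g1 g2 cop.
apply/setP => z; rewrite /kernel inE Fp_fix // /Lminus mulf_eq0 (negbTE c0) /=.
have E k : z ^+ (p ^ k)%N = fr p k z by [].
rewrite !E -fr1.
set a := (r - t)%N; set b := (r + t)%N.
have h2 : (2 * r = a + b)%N by rewrite /a /b; lia.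
rewrite h2.
apply/idP/idP.
- move/eqP => H.
  have H' : fr p (a + b) z = fr p a z + fr p b z - z.
    by apply/eqP; rewrite -subr_eq0 -H; apply/eqP; ring.
  set w := z - fr p a z.
  have Hb : fr p b w = w.
    by rewrite /w fr_sub // -frD addnC H'; ring.
  have Hw1 : fr p 1 w = w by rewrite -g1 fr_gcd.
  have Ha : fr p a z = z - w by rewrite /w; ring.
  have It j : fr p (j * a) z = z - j%:R * w.
    elim: j => [|j IH]; first by rewrite mul0n fr0 mul0r subr0.
    rewrite mulSn frD IH fr_sub // fr_mul fr_nat // (fr_all _ Hw1) Ha -natr1; ring.
  have : fr p (n * a) z = z by rewrite mulnC fr_iter // fr_card.
  rewrite It => /eqP; rewrite subr_eq addrC -subr_eq subrr eq_sym mulf_eq0.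
  rewrite (negbTE (natr_neq0 pr pc n0 cop)) /= => /eqP w0.
  have : fr p a z = z by rewrite Ha w0 subr0.
  by move=> /(fr_gcd n0 cF); rewrite g2 => ->.
- move/eqP => H; rewrite !(fr_all _ H); apply/eqP; ring.
Qed.

Lemma fr2_of (F : finFieldType) p (z : F) : prime p -> p \in [pchar F] ->
  fr p 1 z = - z -> fr p 2 z = z.
Proof. by move=> pr pc H; rewrite (frD _ 1 1) H fr_opp // H opprK. Qed.

Lemma case2 (F : finFieldType) (p n r t : nat) (c : F) :
  prime p -> odd p -> p \in [pchar F] -> (0 < n)%N -> #|F| = (p ^ n)%N ->
  (t < r)%N -> c != 0 ->
  gcdn n (2 * (r + t)) = 2%N -> gcdn n (2 * (r - t)) = 2%N ->
    odd (r - t) -> coprime n p ->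
    kernel (Lplus p r t c) = [set z : F | z ^+ p + z == 0].
Proof.
move=> pr op pc n0 cF tr c0 g1 g2 oa cop.
apply/setP => z; rewrite /kernel !inE /Lplus mulf_eq0 (negbTE c0) /=.
have E k : z ^+ (p ^ k)%N = fr p k z by [].
rewrite !E -fr1.
set a := (r - t)%N; set b := (r + t)%N.
have h2 : (2 * r = a + b)%N by rewrite /a /b; lia.
have ob : odd b.
  have -> : b = (a + 2 * t)%N by rewrite /a /b; lia.
  by rewrite oddD oddM /= oa.
have oab : odd (a + b) = false by rewrite oddD oa ob.
rewrite h2.
apply/idP/idP.
- move/eqP => H.
  have H' : fr p (a + b) z = - (z + fr p a z + fr p b z).
    by apply/eqP; rewrite -subr_eq0 -H; apply/eqP; ring.
  set w := z + fr p a z.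
  have Hb : fr p b w = - w.
    by rewrite /w fr_add // -frD addnC H'; ring.
  have H2b : fr p (2 * b) w = w.
    by rewrite mul2n -addnn frD Hb fr_opp // Hb opprK.
  have Hw2 : fr p 2 w = w by rewrite -g1 fr_gcd.
  have Hw1 : fr p 1 w = - w by rewrite -Hb (fr_mod2 b Hw2) ob.
  have Hwa : fr p a w = - w by rewrite (fr_mod2 a Hw2) oa.
  have Ha : fr p a z = w - z by rewrite /w; ring.
  have H2a : fr p (2 * a) z = z - (w + w).
    by rewrite mul2n -addnn frD Ha fr_sub // Hwa Ha; ring.
  have Hw2a : fr p (2 * a) w = w by rewrite (fr_mod2 (2 * a) Hw2) mul2n odd_double fr0.
  have It j : fr p (j * (2 * a)) z = z - j%:R * (w + w).
    elim: j => [|j IH]; first by rewrite mul0n fr0 mul0r subr0.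
    rewrite mulSn frD IH fr_sub // fr_mul fr_nat // fr_add // Hw2a H2a -natr1; ring.
  have : fr p (n * (2 * a)) z = z by rewrite mulnC fr_iter // fr_card.
  rewrite It => /eqP; rewrite subr_eq addrC -subr_eq subrr eq_sym mulf_eq0.
  rewrite (negbTE (natr_neq0 pr pc n0 cop)) /= -mulr2n -mulr_natl mulf_eq0.
  have two0 : (2%:R : F) != 0.
    rewrite -(dvdn_pcharf pc); apply/negP => /(dvdn_leq (isT : (0 < 2)%N)) h.
    have := prime_gt1 pr; move: op h; clear; case: p => [|[|[|q]]] //=.
  rewrite (negbTE two0) /= => /eqP w0.
  have Haz : fr p a z = - z by rewrite Ha w0 sub0r.
  have : fr p (2 * a) z = z by rewrite mul2n -addnn frD Haz fr_opp // Haz opprK.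
  move=> /(fr_gcd n0 cF); rewrite g2 => Hz2.
  have -> : fr p 1 z = fr p a z by rewrite (fr_mod2 a Hz2) oa.
  by rewrite Haz addNr.
- rewrite addr_eq0 => /eqP H; have H2 := fr2_of pr pc H.
  rewrite (fr_mod2 a H2) (fr_mod2 b H2) (fr_mod2 (a + b) H2) oa ob oab fr0 H.
  apply/eqP; ring.
Qed.

Lemma geo_nat q k : (q * (\sum_(i < k) q.+1 ^ i) + 1 = q.+1 ^ k)%N.
Proof.
elim: k => [|k IH]; first by rewrite big_ord0 muln0.
by rewrite big_ord_recr /= mulnDr addnAC IH expnS mulSn.
Qed.

Lemma odd_geo p k : odd p -> odd (\sum_(i < k) p ^ i)%N = odd k.
Proof.
move=> op; elim: k => [|k IH]; first by rewrite big_ord0.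
by rewrite big_ord_recr /= oddD IH oddX op orbT addbT.
Qed.

Lemma alt_sum (F : finFieldType) (y : F) k :
  (y + 1) * \sum_(i < k) (-1) ^+ i.+1 * y ^+ i = (-1) ^+ k * y ^+ k - 1.
Proof.
elim: k => [|k IH]; first by rewrite big_ord0 mulr0 !expr0 mulr1 subrr.
rewrite big_ord_recr /= mulrDr IH !exprS; ring.
Qed.

Lemma count_roots (F : finFieldType) p n : prime p -> odd p -> (0 < n)%N ->
  #|F| = (p ^ n)%N -> (2 %| n)%N -> #|[set z : F | z ^+ p + z == 0]| = p.
Proof.
move=> pr op n0 cF n2.
set A := [set z : F | z ^+ p + z == 0].
have p1 := prime_gt1 pr.
have cA : (#|A| <= p)%N.
  have sz : size ('X^p + 'X : {poly F}) = p.+1.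
    by rewrite size_polyDl ?size_polyXn // size_polyX ltnS.
  rewrite -ltnS -sz; apply: card_roots.
    by rewrite -size_poly_eq0 sz.
  by move=> x; rewrite inE rootE !hornerE.
set m := (\sum_(i < n) p ^ i)%N.
have hm : ((p.-1) * m + 1 = p ^ n)%N.
  by rewrite /m -{2 3}(prednK (prime_gt0 pr)) geo_nat.
have em : ~~ odd m by rewrite /m odd_geo // -dvdn2.
case Em : m => [|m'].
  move: hm; rewrite Em muln0 add0n => hm1.
  have : (p ^ 1 <= p ^ n)%N by rewrite leq_exp2l.
  rewrite -hm1 expn1; lia.
set H : {poly F} := \sum_(i < m) (-1) ^+ i.+1 *: 'X^(p.-1 * i).
have Hev z : H.[z] = \sum_(i < m) (-1) ^+ i.+1 * (z ^+ p.-1) ^+ i.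
  rewrite /H horner_sum; apply: eq_bigr => i _.
  by rewrite hornerZ hornerXn exprM.
have H0 : H != 0.
  have z0 : (0:F) ^+ p.-1 = 0.
    by rewrite expr0n; have -> : (p.-1 == 0%N) = false by apply/eqP; lia.
  apply/negP => /eqP H0; have := Hev 0; rewrite H0 horner0 z0 Em big_ord_recl /=.
  rewrite big1 => [|i _]; last by rewrite expr0n /= mulr0.
  move=> /eqP; rewrite expr0 mulr1 addr0 expr1 eq_sym oppr_eq0 oner_eq0 //.
have szH : (size H <= p.-1 * m' + 1)%N.
  rewrite /H; apply: (big_ind (fun q : {poly F} => size q <= p.-1 * m' + 1)%N).
  - by rewrite size_poly0.
  - move=> x y hx hy; apply: leq_trans (size_polyD _ _) _; by rewrite geq_max hx hy.
  - move=> i _; apply: leq_trans (size_scale_leq _ _) _; rewrite size_polyXn addn1 ltnS.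
    by rewrite leq_mul2l -ltnS -Em ltn_ord orbT.
have key z : (z ^+ p + z) * H.[z] = 0.
  have -> : z ^+ p + z = z * (z ^+ p.-1 + 1).
    by rewrite mulrDr mulr1 -exprS (prednK (prime_gt0 pr)).
  rewrite Hev -mulrA alt_sum.
  have -> : (-1) ^+ m = 1 :> F.
    by rewrite -signr_odd (negbTE em) expr0.
  rewrite mul1r -exprM mulrBr mulr1 -exprS.
  have -> : (p.-1 * m).+1 = #|F| by rewrite cF -hm addn1.
  by rewrite expf_card subrr.
set B := [set z : F | root H z].
have cU : (#|F| <= #|A| + #|B|)%N.
  apply: leq_trans (leq_card_setU A B); rewrite -cardsT subset_leq_card //.
  apply/subsetP => z _; rewrite !inE; move: (key z) => /eqP; rewrite mulf_eq0 rootE.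
  by case/orP => ->; rewrite ?orbT.
have cB : (#|B| < size H)%N by apply: card_roots => // z; rewrite inE.
apply/eqP; rewrite eqn_leq cA /=.
move: cU; rewrite cF -hm Em mulnS.
have := prednK (prime_gt0 pr).
move: szH cB; set X := (p.-1 * m')%N; set q := p.-1; set sA := #|A|; set sB := #|B|; set sH := size H.
clearbody X q sA sB sH; lia.
Qed.

Unset Implicit Arguments.
Theorem mainTheorem5 (F : finFieldType) (p n r t : nat) (c : F) :
  prime p -> odd p -> p \in [pchar F] -> (0 < n)%N -> #|F| = (p ^ n)%N ->
  (t < r)%N -> c \in primeSubfield F p -> c != 0 ->
  (* first case *)
  ((gcdn n (r + t) = 1%N -> gcdn n (r - t) = 1%N -> coprime n p ->
    kernel (Lminus p r t c) = primeSubfield F p)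
  /\
  (* second case *)
   (gcdn n (2 * (r + t)) = 2%N -> gcdn n (2 * (r - t)) = 2%N ->
    odd (r - t) -> coprime n p ->
    [/\ kernel (Lplus p r t c) = [set z : F | z ^+ p + z == 0],
        (forall z : F, z ^+ p + z = 0 -> z ^+ (p ^ 2) = z)
      & #|kernel (Lplus p r t c)| = p])).
Proof.
move=> pr op pc n0 cF tr _ c0; split.
  exact: case1.
move=> g1 g2 oa cop.
have K := case2 pr op pc n0 cF tr c0 g1 g2 oa cop.
split => //.
- move=> z /eqP; rewrite addr_eq0 -fr1 => /eqP H.
  by have := fr2_of pr pc H.
- rewrite K; apply: (count_roots (n := n)) => //.
  by have := dvdn_gcdl n (2 * (r + t)); rewrite g1.
Qed.
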